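(* Let $V$ be a commutative unital quantale whose underlying lattice is a frame and in which $k=\top$. Then the category $\mathsf{VGrp}$ is unital if and only if $V$ is a frame as a quantale, i.e. $\otimes=\wedge$.
   Context: A commutative unital quantale $V$ is a complete lattice (top $\top$, bottom $\bot$) with a commutative associative operation $\otimes$ with unit $k$ preserving arbitrary joins in each variable (including the empty join). A $V$-category $(X,a)$ is a set with $a\colon X\times X\to V$, $k\le a(x,x)$, $a(x,x')\otimes a(x',x'')\le a(x,x'')$. A $V$-group $(X,a,+)$ is a $V$-category with a group structure (additive notation, not necessarily abelian) such that $a(x_1,x_2)\otimes a(x_1',x_2')\le a(x_1+x_1',x_2+x_2')$; morphisms ($V$-homomorphisms) are group homomorphisms $f$ with $a(x,x')\le b(f(x),f(x'))$. This gives the category $\mathsf{VGrp}$, which is pointed and finitely complete when $k=\top$; the product of $(X,a)$ and $(Y,b)$ is $X\times Y$ with $(a\wedge b)((x,y),(x',y'))=a(x,x')\wedge b(y,y')$. A pair of morphisms with common codomain is jointly strongly epimorphic if whenever both factor through a monomorphism $m$, $m$ is an isomorphism. A pointed finitely complete category is unital if for all objects $X,Y$ the morphisms $\langle 1,0\rangle\colon X\to X\times Y$ and $\langle 0,1\rangle\colon Y\to X\times Y$ are jointly strongly epimorphic. *)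

(* Defs.v *)
Set Implicit Arguments.
Unset Strict Implicit.

Record quantale := Quantale {
  qcar :> Type;
  qle : qcar -> qcar -> Prop;
  qle_refl : forall x, qle x x;
  qle_trans : forall x y z, qle x y -> qle y z -> qle x z;
  qle_antisym : forall x y, qle x y -> qle y x -> x = y;
  qsup : (qcar -> Prop) -> qcar;
  qsup_ub : forall (S : qcar -> Prop) x, S x -> qle x (qsup S);
  qsup_least : forall (S : qcar -> Prop) y, (forall x, S x -> qle x y) -> qle (qsup S) y;
  qten : qcar -> qcar -> qcar;
  qk : qcar;
  qten_assoc : forall x y z, qten x (qten y z) = qten (qten x y) z;
  qten_comm : forall x y, qten x y = qten y x;
  qten_k : forall x, qten qk x = x;
  (* preservation of arbitrary (incl. empty) joins; by commutativity in each variable *)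
  qten_sup : forall x (S : qcar -> Prop),
      qten x (qsup S) = qsup (fun y => exists s, S s /\ y = qten x s)
}.

Arguments qle {q}. Arguments qsup {q}. Arguments qten {q}. Arguments qk {q}.

Definition qtop {V : quantale} : V := qsup (fun _ => True).
Definition qbot {V : quantale} : V := qsup (fun _ => False).
Definition qmeet {V : quantale} (x y : V) : V := qsup (fun z => qle z x /\ qle z y).

Definition lattice_is_frame (V : quantale) : Prop :=
  forall (x : V) (S : V -> Prop),
    qmeet x (qsup S) = qsup (fun y => exists s, S s /\ y = qmeet x s).

Definition tensor_is_meet (V : quantale) : Prop :=
  forall x y : V, qten x y = qmeet x y.

Lemma qmeet_lb1 (V : quantale) (x y : V) : qle (qmeet x y) x.
Proof. apply qsup_least. intros z [H _]; exact H. Qed.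
Lemma qmeet_lb2 (V : quantale) (x y : V) : qle (qmeet x y) y.
Proof. apply qsup_least. intros z [_ H]; exact H. Qed.
Lemma qmeet_glb (V : quantale) (x y z : V) : qle z x -> qle z y -> qle z (qmeet x y).
Proof. intros; apply qsup_ub; split; assumption. Qed.

Lemma qten_monor (V : quantale) (c a b : V) : qle a b -> qle (qten c a) (qten c b).
Proof.
  intros Hab.
  assert (E : b = qsup (fun y => y = a \/ y = b)).
  { apply qle_antisym.
    - apply qsup_ub; right; reflexivity.
    - apply qsup_least; intros y [->| ->]; [exact Hab | apply qle_refl]. }
  rewrite E, qten_sup. apply qsup_ub. exists a; split; [left; reflexivity | reflexivity].
Qed.

Lemma qten_mono (V : quantale) (a b c d : V) :
  qle a b -> qle c d -> qle (qten a c) (qten b d).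
Proof.
  intros H1 H2. apply qle_trans with (qten a d); [apply qten_monor; exact H2|].
  rewrite (qten_comm a d), (qten_comm b d). apply qten_monor; exact H1.
Qed.

Record VGroup (V : quantale) := MkVGroup {
  vcar :> Type;
  vadd : vcar -> vcar -> vcar;
  vzero : vcar;
  vopp : vcar -> vcar;
  vadd_assoc : forall x y z, vadd x (vadd y z) = vadd (vadd x y) z;
  vadd_0l : forall x, vadd vzero x = x;
  vadd_0r : forall x, vadd x vzero = x;
  vadd_oppl : forall x, vadd (vopp x) x = vzero;
  vadd_oppr : forall x, vadd x (vopp x) = vzero;
  vdist : vcar -> vcar -> V;
  vdist_refl : forall x, qle qk (vdist x x);
  vdist_trans : forall x y z, qle (qten (vdist x y) (vdist y z)) (vdist x z);
  vdist_add : forall x1 x2 y1 y2,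
      qle (qten (vdist x1 x2) (vdist y1 y2)) (vdist (vadd x1 y1) (vadd x2 y2))
}.

Arguments vadd {V v}. Arguments vzero {V v}. Arguments vopp {V v}. Arguments vdist {V v}.

Definition is_vhom {V : quantale} (X Y : VGroup V) (f : X -> Y) : Prop :=
  (forall x x', f (vadd x x') = vadd (f x) (f x')) /\
  (forall x x', qle (vdist x x') (vdist (f x) (f x'))).

Definition is_mono {V : quantale} (M Z : VGroup V) (m : M -> Z) : Prop :=
  is_vhom m /\
  forall (W : VGroup V) (g h : W -> M), is_vhom g -> is_vhom h ->
    (forall w, m (g w) = m (h w)) -> forall w, g w = h w.

Definition is_iso {V : quantale} (M Z : VGroup V) (m : M -> Z) : Prop :=
  is_vhom m /\ exists n : Z -> M, is_vhom n /\
    (forall x, n (m x) = x) /\ (forall z, m (n z) = z).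

Definition jointly_strongly_epi {V : quantale} (X Y Z : VGroup V)
  (f : X -> Z) (g : Y -> Z) : Prop :=
  forall (M : VGroup V) (m : M -> Z) (f' : X -> M) (g' : Y -> M),
    is_mono m -> is_vhom f' -> is_vhom g' ->
    (forall x, m (f' x) = f x) -> (forall y, m (g' y) = g y) ->
    is_iso m.

Section Product.
Variables (V : quantale) (X Y : VGroup V).

Let padd (p q : X * Y) : X * Y := (vadd (fst p) (fst q), vadd (snd p) (snd q)).
Let pdist (p q : X * Y) : V := qmeet (vdist (fst p) (fst q)) (vdist (snd p) (snd q)).

Definition prodVG : VGroup V.
Proof.
  refine (@MkVGroup V (X * Y)%type padd (vzero, vzero) (fun p => (vopp (fst p), vopp (snd p)))
            _ _ _ _ _ pdist _ _ _); unfold padd, pdist.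
  - intros [] [] []; simpl; rewrite !vadd_assoc; reflexivity.
  - intros []; simpl; rewrite !vadd_0l; reflexivity.
  - intros []; simpl; rewrite !vadd_0r; reflexivity.
  - intros []; simpl; rewrite !vadd_oppl; reflexivity.
  - intros []; simpl; rewrite !vadd_oppr; reflexivity.
  - intros []; simpl; apply qmeet_glb; apply vdist_refl.
  - intros [] [] []; simpl; apply qmeet_glb.
    + eapply qle_trans; [|apply vdist_trans]; apply qten_mono; apply qmeet_lb1.
    + eapply qle_trans; [|apply vdist_trans]; apply qten_mono; apply qmeet_lb2.
  - intros [] [] [] []; simpl; apply qmeet_glb.
    + eapply qle_trans; [|apply vdist_add]; apply qten_mono; apply qmeet_lb1.
    + eapply qle_trans; [|apply vdist_add]; apply qten_mono; apply qmeet_lb2.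
Defined.

Definition inl_VG (x : X) : prodVG := (x, vzero).
Definition inr_VG (y : Y) : prodVG := (vzero, y).

End Product.

Definition VGrp_unital (V : quantale) : Prop :=
  forall X Y : VGroup V, jointly_strongly_epi (@inl_VG V X Y) (@inr_VG V X Y).

(* Main.v *)
Require Import Defs.
From Stdlib Require Import ProofIrrelevance.
Set Implicit Arguments.
Unset Strict Implicit.

Lemma le_top (V : quantale) (x : V) : qle x qtop.
Proof. apply qsup_ub; exact I. Qed.

Lemma ten_le_l (V : quantale) (ktop : qk = qtop :> V) (a b : V) : qle (qten a b) a.
Proof.
  apply qle_trans with (qten a qtop). apply qten_monor, le_top.
  rewrite <- ktop, qten_comm, qten_k. apply qle_refl.
Qed.

Lemma ten_le_r (V : quantale) (ktop : qk = qtop :> V) (a b : V) : qle (qten a b) b.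
Proof. rewrite qten_comm; apply ten_le_l; exact ktop. Qed.

Lemma ten_le_meet (V : quantale) (ktop : qk = qtop :> V) (a b : V) :
  qle (qten a b) (qmeet a b).
Proof. apply qmeet_glb; [apply ten_le_l | apply ten_le_r]; exact ktop. Qed.

Lemma ten_top_r (V : quantale) (ktop : qk = qtop :> V) (a : V) : qten a qtop = a.
Proof. rewrite <- ktop, qten_comm, qten_k; reflexivity. Qed.

Definition bdist (V : quantale) (a : V) (x y : bool) : V :=
  match x, y with true, true | false, false => qtop | _, _ => a end.

Definition boolVG (V : quantale) (ktop : qk = qtop :> V) (a : V) : VGroup V.
Proof.
  refine (@MkVGroup V bool xorb false (fun x => x) _ _ _ _ _ (bdist a) _ _ _).
  - intros [] [] []; reflexivity.
  - intros []; reflexivity.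
  - intros []; reflexivity.
  - intros []; reflexivity.
  - intros []; reflexivity.
  - intros []; unfold bdist; simpl; rewrite ktop; apply qle_refl.
  - intros [] [] []; unfold bdist; simpl;
      first [apply le_top | apply (ten_le_l ktop) | apply (ten_le_r ktop)].
  - intros [] [] [] []; unfold bdist; simpl;
      first [apply le_top | apply (ten_le_l ktop) | apply (ten_le_r ktop)].
Defined.

Lemma swap4 (V : quantale) (A B C D : V) :
  qten (qten A B) (qten C D) = qten (qten A C) (qten B D).
Proof.
  rewrite <- !qten_assoc. f_equal. rewrite !qten_assoc. f_equal. apply qten_comm.
Qed.

Definition tprodVG (V : quantale) (X Y : VGroup V) : VGroup V.
Proof.
  refine (@MkVGroup V (X * Y)%type
            (fun p q => (vadd (fst p) (fst q), vadd (snd p) (snd q))) (vzero, vzero)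
            (fun p => (vopp (fst p), vopp (snd p))) _ _ _ _ _
            (fun p q => qten (vdist (fst p) (fst q)) (vdist (snd p) (snd q))) _ _ _).
  - intros [] [] []; simpl; rewrite !vadd_assoc; reflexivity.
  - intros []; simpl; rewrite !vadd_0l; reflexivity.
  - intros []; simpl; rewrite !vadd_0r; reflexivity.
  - intros []; simpl; rewrite !vadd_oppl; reflexivity.
  - intros []; simpl; rewrite !vadd_oppr; reflexivity.
  - intros []; simpl. apply qle_trans with (qten qk qk); [rewrite qten_k; apply qle_refl|]. apply qten_mono; apply vdist_refl.
  - intros [] [] []; simpl. rewrite swap4. apply qten_mono; apply vdist_trans.
  - intros [] [] [] []; simpl. rewrite swap4. apply qten_mono; apply vdist_add.
Defined.

Lemma cancel_l (V : quantale) (G : VGroup V) (a b c : G) : vadd a b = vadd a c -> b = c.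
Proof.
  intros H. apply (f_equal (vadd (vopp a))) in H. rewrite !vadd_assoc, vadd_oppl, !vadd_0l in H.
  exact H.
Qed.

Lemma hom_zero (V : quantale) (G H : VGroup V) (f : G -> H) :
  (forall x x', f (vadd x x') = vadd (f x) (f x')) -> f vzero = vzero.
Proof.
  intros Hf. apply (cancel_l (a := f vzero)). rewrite <- Hf, vadd_0l, vadd_0r. reflexivity.
Qed.

Lemma hom_opp (V : quantale) (G H : VGroup V) (f : G -> H) :
  (forall x x', f (vadd x x') = vadd (f x) (f x')) -> forall x, f (vopp x) = vopp (f x).
Proof.
  intros Hf x. apply (cancel_l (a := f x)). rewrite <- Hf, !vadd_oppr. apply hom_zero; exact Hf.
Qed.

Definition kerVG (V : quantale) (M Z : VGroup V) (m : M -> Z)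
  (Hm : forall x x', m (vadd x x') = vadd (m x) (m x')) : VGroup V.
Proof.
  assert (Hadd : forall p q : M, m p = vzero -> m q = vzero -> m (vadd p q) = vzero).
  { intros p q Hp Hq. rewrite Hm, Hp, Hq, vadd_0l; reflexivity. }
  assert (H0 : m vzero = vzero) by (apply hom_zero; exact Hm).
  assert (Hopp : forall p : M, m p = vzero -> m (vopp p) = vzero).
  { intros p Hp. rewrite (hom_opp Hm), Hp.
    rewrite <- (vadd_0l (vopp vzero)). apply vadd_oppr. }
  refine (@MkVGroup V {x : M | m x = vzero}
    (fun p q => exist _ (vadd (proj1_sig p) (proj1_sig q)) (Hadd _ _ (proj2_sig p) (proj2_sig q)))
    (exist _ vzero H0)
    (fun p => exist _ (vopp (proj1_sig p)) (Hopp _ (proj2_sig p))) _ _ _ _ _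
    (fun p q => vdist (proj1_sig p) (proj1_sig q)) _ _ _).
  - intros [] [] []; apply eq_sig_hprop; [intros; apply proof_irrelevance|]; simpl; apply vadd_assoc.
  - intros []; apply eq_sig_hprop; [intros; apply proof_irrelevance|]; simpl; apply vadd_0l.
  - intros []; apply eq_sig_hprop; [intros; apply proof_irrelevance|]; simpl; apply vadd_0r.
  - intros []; apply eq_sig_hprop; [intros; apply proof_irrelevance|]; simpl; apply vadd_oppl.
  - intros []; apply eq_sig_hprop; [intros; apply proof_irrelevance|]; simpl; apply vadd_oppr.
  - intros []; apply vdist_refl.
  - intros [] [] []; apply vdist_trans.
  - intros [] [] [] []; apply vdist_add.
Defined.

Lemma mono_inj (V : quantale) (ktop : qk = qtop :> V) (M Z : VGroup V) (m : M -> Z) :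
  is_mono m -> forall a b, m a = m b -> a = b.
Proof.
  intros [[Hadd Hd] Hmono] a b Hab.
  assert (K : forall x, m x = vzero -> x = vzero).
  { intros x Hx.
    pose (W := kerVG Hadd).
    assert (Hg : is_vhom (X:=W) (Y:=M) (@proj1_sig _ _)).
    { split; [intros [] []; reflexivity | intros [] []; apply qle_refl]. }
    assert (Hh : is_vhom (X:=W) (Y:=M) (fun _ => vzero)).
    { split; [intros; symmetry; apply vadd_0l|].
      intros; apply qle_trans with qtop; [apply le_top|]. rewrite <- ktop; apply vdist_refl. }
    pose proof (Hmono W _ _ Hg Hh) as E.
    refine (E _ (exist _ x Hx)).
    intros [w Hw]; simpl. rewrite Hw. symmetry; apply hom_zero; exact Hadd. }
  assert (E : vadd a (vopp b) = vzero).
  { apply K. rewrite Hadd, (hom_opp Hadd), Hab. apply vadd_oppr. }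
  rewrite <- (vadd_0r a), <- (vadd_oppl b), vadd_assoc, E, vadd_0l. reflexivity.
Qed.

Unset Implicit Arguments.
Theorem proposition6p1 (V : quantale) :
  lattice_is_frame V -> qk = qtop :> V ->
  (VGrp_unital V <-> tensor_is_meet V).
Proof.
  intros _ ktop. split.
  - intros H x y. apply qle_antisym; [apply ten_le_meet; exact ktop|].
    pose (X := boolVG ktop x). pose (Y := boolVG ktop y).
    pose (M := tprodVG X Y).
    pose (m := (fun p => p) : M -> prodVG X Y).
    assert (Hm : is_mono m).
    { split.
      - split; [intros; reflexivity|]. intros [] []; simpl. apply ten_le_meet; exact ktop.
      - intros W g h _ _ E w. exact (E w). }
    assert (Hf : is_vhom (X:=X) (Y:=M) (fun a => (a, false))).
    { split; [intros; reflexivity|]. intros a a'; simpl.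
      unfold bdist at 2; simpl. rewrite (ten_top_r ktop). apply qle_refl. }
    assert (Hg : is_vhom (X:=Y) (Y:=M) (fun b => (false, b))).
    { split; [intros; reflexivity|]. intros b b'; simpl.
      unfold bdist at 1; simpl. rewrite qten_comm, (ten_top_r ktop). apply qle_refl. }
    destruct (H X Y M m _ _ Hm Hf Hg (fun _ => eq_refl) (fun _ => eq_refl))
      as [_ [n [[_ Hnd] [Hnm _]]]].
    pose proof (Hnd (true, true) (false, false)) as D.
    assert (E1 : n (true, true) = (true, true)) by exact (Hnm (true, true)).
    assert (E2 : n (false, false) = (false, false)) by exact (Hnm (false, false)).
    rewrite E1, E2 in D.
    exact D.
  - intros Hmeet X Y M m f' g' Hmono [Hfa Hfd] [Hga Hgd] Hmf Hmg.
    pose proof (mono_inj ktop Hmono) as Inj.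
    destruct Hmono as [[Hma Hmd] _].
    split; [split; assumption|].
    exists (fun p => vadd (f' (fst p)) (g' (snd p))).
    assert (Hmn : forall p, m (vadd (f' (fst p)) (g' (snd p))) = p).
    { intros [a b]; simpl. rewrite Hma, Hmf, Hmg. unfold inl_VG, inr_VG; simpl.
      rewrite vadd_0r, vadd_0l; reflexivity. }
    split; [|split].
    + split.
      * intros [a b] [a' b']; simpl.
        assert (C : vadd (f' a') (g' b) = vadd (g' b) (f' a')).
        { apply Inj. rewrite !Hma, Hmf, Hmg. unfold inl_VG, inr_VG; simpl.
          rewrite !vadd_0r, !vadd_0l; reflexivity. }
        rewrite Hfa, Hga. rewrite <- !vadd_assoc. f_equal.
        rewrite !vadd_assoc. f_equal. exact C.
      * intros [a b] [a' b']; simpl. rewrite <- Hmeet.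
        eapply qle_trans; [|apply vdist_add]. apply qten_mono; [apply Hfd | apply Hgd].
    + intros z. apply Inj. apply Hmn.
    + exact Hmn.
Qed.
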